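(* For every integers $d \geq 2$ and $s,t \geq 1$, we have $$\tfrac{s}{s+t}\mathsf U_{d,s}+\tfrac{t}{s+t}\mathsf U_{d,t}\subseteq \mathsf U_{d,s+t},$$ i.e. for all $B\in\mathsf U_{d,s}$, $C\in\mathsf U_{d,t}$, the matrix $\tfrac{s}{s+t}B+\tfrac{t}{s+t}C$ belongs to $\mathsf U_{d,s+t}$.
   Context: For integers $d\ge 2$, $s\ge 1$, a matrix $U\in\mathcal U(ds)$ (unitary $ds\times ds$ complex matrices) is viewed as a $d\times d$ block matrix with blocks $U_{ij}\in M_s(\mathbb C)$. Define $\phi_{d,s}(U)=\big(\tfrac1s\|U_{ij}\|_F^2\big)_{i,j=1}^d$, where $\|X\|_F=\operatorname{Tr}(XX^* )^{1/2}$, and $\mathsf U_{d,s}:=\phi_{d,s}(\mathcal U(ds))$. *)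

(* Defs.v *)
From HB Require Import structures.
From mathcomp Require Import all_boot all_order all_algebra.
From mathcomp Require Import complex.
From mathcomp Require Import reals.
Set Implicit Arguments. Unset Strict Implicit. Unset Printing Implicit Defensive.
Import Order.TTheory GRing.Theory Num.Theory.
Local Open Scope ring_scope.

Definition adjmx (R : realType) (n : nat) (U : 'M[R[i]]_n) : 'M[R[i]]_n :=
  (map_mx (fun z => z^*) U)^T.

Definition unitary_mx (R : realType) (n : nat) (U : 'M[R[i]]_n) : Prop :=
  U *m adjmx U = 1%:M.

(* phi_{d,s}(U)_{ij} = (1/s) ||U_{ij}||_F^2, where U_{ij} is the (i,j) s x s block,
   whose (a,b) entry is U (i*s+a) (j*s+b) = U (mxvec_index i a) (mxvec_index j b). *)
Definition phi_ds (R : realType) (d s : nat) (U : 'M[R[i]]_(d * s)) : 'M[R[i]]_d :=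
  \matrix_(i < d, j < d)
    (s%:R^-1 * \sum_(a < s) \sum_(b < s)
        `|U (mxvec_index i a) (mxvec_index j b)| ^+ 2).

Definition Uset (R : realType) (d s : nat) (B : 'M[R[i]]_d) : Prop :=
  exists U : 'M[R[i]]_(d * s), unitary_mx U /\ phi_ds U = B.

(* Main.v *)
Require Import Defs.
From HB Require Import structures.
From mathcomp Require Import all_boot all_order all_algebra.
From mathcomp Require Import complex.
From mathcomp Require Import reals.
From mathcomp Require Import ring.
Import Order.TTheory GRing.Theory Num.Theory.
Local Open Scope ring_scope.

Lemma sum_mxvec (V : nmodType) m n (F : 'I_(m*n) -> V) :
  \sum_k F k = \sum_(i < m) \sum_(j < n) F (mxvec_index i j).
Proof.
rewrite pair_big /= (reindex _ (@curry_mxvec_bij m n)) /=.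
by apply: eq_bigr => -[i j].
Qed.

Lemma mxvec_index_eq m n (i i' : 'I_m) (a a' : 'I_n) :
  (mxvec_index i a == mxvec_index i' a') = (i == i') && (a == a').
Proof.
apply/eqP/andP => [h|[/eqP-> /eqP->]//].
have := congr1 (fun k => enum_val (cast_ord (esym (mxvec_cast m n)) k)) h.
by rewrite /= /mxvec_index !cast_ordK !enum_rankK; case=> -> ->.
Qed.

Section Blk.
Variable (R : realType) (d s t : nat).
Variables (U : 'M[R[i]]_(d * s)) (V : 'M[R[i]]_(d * t)).

Definition unv (k : 'I_(d * (s + t))) : 'I_d * 'I_(s + t) :=
  enum_val (cast_ord (esym (mxvec_cast d (s + t))) k).

Definition blkf (p q : 'I_d * 'I_(s + t)) : R[i] :=
  match split p.2, split q.2 with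
  | inl a, inl b => U (mxvec_index p.1 a) (mxvec_index q.1 b)
  | inr a, inr b => V (mxvec_index p.1 a) (mxvec_index q.1 b)
  | _, _ => 0
  end.

Definition blk : 'M[R[i]]_(d * (s + t)) := locked (\matrix_(k, l) blkf (unv k) (unv l)).

Lemma blkE i a j b : blk (mxvec_index i a) (mxvec_index j b) = blkf (i, a) (j, b).
Proof. by rewrite /blk -lock mxE /unv /mxvec_index !cast_ordK !enum_rankK. Qed.

Lemma split_l (a : 'I_s) : split (lshift t a) = inl a.
Proof. exact: (unsplitK (inl _ a)). Qed.
Lemma split_r (a : 'I_t) : split (rshift s a) = inr a.
Proof. exact: (unsplitK (inr _ a)). Qed.

Lemma blkLL i a j b : blk (mxvec_index i (lshift t a)) (mxvec_index j (lshift t b))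
   = U (mxvec_index i a) (mxvec_index j b).
Proof. by rewrite blkE /blkf /= !split_l. Qed.
Lemma blkRR i a j b : blk (mxvec_index i (rshift s a)) (mxvec_index j (rshift s b))
   = V (mxvec_index i a) (mxvec_index j b).
Proof. by rewrite blkE /blkf /= !split_r. Qed.
Lemma blkLR i a j b : blk (mxvec_index i (lshift t a)) (mxvec_index j (rshift s b)) = 0.
Proof. by rewrite blkE /blkf /= split_l split_r. Qed.
Lemma blkRL i a j b : blk (mxvec_index i (rshift s a)) (mxvec_index j (lshift t b)) = 0.
Proof. by rewrite blkE /blkf /= split_l split_r. Qed.

End Blk.
Arguments blk {R d s t}.

Lemma unitary_entry (R : realType) d s (U : 'M[R[i]]_(d * s)) :
  unitary_mx U -> forall i a i' a',
  \sum_(j < d) \sum_(b < s) U (mxvec_index i a) (mxvec_index j b)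
      * (U (mxvec_index i' a') (mxvec_index j b))^* = ((i == i') && (a == a'))%:R.
Proof.
move=> hU i a i' a'.
have := congr1 (fun M : 'M_(d * s) => M (mxvec_index i a) (mxvec_index i' a')) hU.
rewrite /= !mxE sum_mxvec mxvec_index_eq => <-.
by apply: eq_bigr => j _; apply: eq_bigr => b _; rewrite !mxE.
Qed.

Arguments unitary_entry {R d s U}.

Theorem proposition2p6 (R : realType) (d s t : nat) :
  (2 <= d)%N -> (1 <= s)%N -> (1 <= t)%N ->
  forall B C : 'M[R[i]]_d,
    Uset s B -> Uset t C ->
    Uset (s + t) ((s%:R / (s + t)%:R) *: B + (t%:R / (s + t)%:R) *: C).
Proof.
move=> _ hs ht B C [U [hU <-]] [V [hV <-]].
exists (blk U V); split.
  apply/matrixP => k l.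
  case/mxvec_indexP: k => i a; case/mxvec_indexP: l => i' a'.
  rewrite !mxE sum_mxvec mxvec_index_eq.
  under eq_bigr => j _ do rewrite big_split_ord /=.
  rewrite /adjmx.
  under eq_bigr => j _ do under eq_bigr => b _ do rewrite !mxE.
  under eq_bigr => j _ do under [X in _ + X]eq_bigr => b _ do rewrite !mxE.
  rewrite -(splitK a) -(splitK a'); case: (split a) => a1; case: (split a') => a2 /=.
  - rewrite eq_lshift -(unitary_entry hU); apply: eq_bigr => j _.
    rewrite [X in _ + X]big1 ?addr0; last by move=> b _; rewrite blkLR mul0r.
    by apply: eq_bigr => b _; rewrite !blkLL.
  - rewrite eq_lrshift andbF big1 // => j _.
    rewrite !big1 ?addr0 // => b _.
      by rewrite blkLR mul0r.
    by rewrite blkRL conjC0 mulr0.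
  - rewrite eq_rlshift andbF big1 // => j _.
    rewrite !big1 ?addr0 // => b _.
      by rewrite blkLR conjC0 mulr0.
    by rewrite blkRL mul0r.
  - rewrite eq_rshift -(unitary_entry hV); apply: eq_bigr => j _.
    rewrite big1 ?add0r; last by move=> b _; rewrite blkRL mul0r.
    by apply: eq_bigr => b _; rewrite !blkRR.
apply/matrixP => i j; rewrite !mxE big_split_ord /=.
have e1 : forall a : 'I_s, \sum_(b < s + t) `|blk U V (mxvec_index i (lshift t a)) (mxvec_index j b)| ^+ 2
   = \sum_(b < s) `|U (mxvec_index i a) (mxvec_index j b)| ^+ 2.
  move=> a; rewrite big_split_ord /= [X in _ + X]big1 ?addr0.
    by apply: eq_bigr => b _; rewrite blkLL.
  by move=> b _; rewrite blkLR normr0 expr0n.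
have e2 : forall a : 'I_t, \sum_(b < s + t) `|blk U V (mxvec_index i (rshift s a)) (mxvec_index j b)| ^+ 2
   = \sum_(b < t) `|V (mxvec_index i a) (mxvec_index j b)| ^+ 2.
  move=> a; rewrite big_split_ord /= big1 ?add0r.
    by apply: eq_bigr => b _; rewrite blkRR.
  by move=> b _; rewrite blkRL normr0 expr0n.
rewrite (eq_bigr _ (fun a _ => e1 a)) (eq_bigr _ (fun a _ => e2 a)).
have s0 : (s%:R : R[i]) != 0 by rewrite pnatr_eq0 -lt0n.
have t0 : (t%:R : R[i]) != 0 by rewrite pnatr_eq0 -lt0n.
have st0 : ((s + t)%:R : R[i]) != 0 by rewrite pnatr_eq0 addn_eq0 negb_and -!lt0n hs.
rewrite natrD in st0 *.
field.
by rewrite s0 t0 st0.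
Qed.
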